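(* Let $E_1,E_2$ be operator spaces of common finite dimension $k$, with bases $(e^1_1,\dots,e^1_k)$ of $E_1$ and $(e^2_1,\dots,e^2_k)$ of $E_2$ that are completely $1$-unconditional: for every $\varepsilon=(\varepsilon_1,\dots,\varepsilon_k)\in\{-1,1\}^k$, the maps $V^1_\varepsilon\colon E_1\to E_1$, $V^1_\varepsilon(e^1_i)=\varepsilon_ie^1_i$, and $V^2_\varepsilon\colon E_2\to E_2$, $V^2_\varepsilon(e^2_i)=\varepsilon_ie^2_i$, are complete contractions. Let $\Delta\colon E_1\otimes_hE_2\to E_1\otimes_hE_2$ be defined by $\Delta(e^1_i\otimes e^2_j)=0$ if $i\neq j$ and $\Delta(e^1_i\otimes e^2_i)=e^1_i\otimes e^2_i$. Then $\Delta$ is a complete contraction.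
   Context: $\otimes_h$ denotes the Haagerup tensor product of operator spaces. *)

(* Defs.v *)
From HB Require Import structures.
From mathcomp Require Import all_boot all_order all_algebra.
From mathcomp Require Import boolp classical_sets reals.
From mathcomp Require Import complex.
Set Implicit Arguments. Unset Strict Implicit. Unset Printing Implicit Defensive.
Import Order.TTheory GRing.Theory Num.Theory.
Local Open Scope ring_scope.
Local Open Scope classical_set_scope.

Section OpSpaces.
Variable R : realType.
Local Notation C := R[i].

Definition cabs (c : C) : R := Num.sqrt (complex.Re c ^+ 2 + complex.Im c ^+ 2).

Definition vnorm n (v : 'cV[C]_n) : R := Num.sqrt (\sum_i cabs (v i 0) ^+ 2).

Definition opnorm m n (A : 'M[C]_(m, n)) : R :=
  sup [set vnorm (A *m v) | v in [set v : 'cV[C]_n | vnorm v <= 1]].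

(* A k-dimensional operator space with a fixed basis (e_1,...,e_k) is identified,
   through its basis, with C^k.  An element of M_n(E) is then given by its
   coefficient matrices: x = sum_a x a (x) e_a, with x : 'I_k -> 'M_n.
   An (abstract) operator space structure is a family of norms on M_n(E)
   satisfying Ruan's axioms. *)
Definition mxE k n := 'I_k -> 'M[C]_n.
Definition mxnorms k := forall n, mxE k n -> R.

Definition is_opspace k (N : mxnorms k) : Prop :=
  [/\
      (forall n (x : mxE k n), 0 <= N n x) /\
      (forall n (x : mxE k n), N n x = 0 -> forall a, x a = 0),
      (forall n (c : C) (x : mxE k n), N n (fun a => c *: x a) = cabs c * N n x),
      (forall n (x y : mxE k n), N n (fun a => x a + y a) <= N n x + N n y),
      (forall m n (al : 'M[C]_(n, m)) (x : mxE k m) (be : 'M[C]_(m, n)),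
          N n (fun a => al *m x a *m be) <= opnorm al * N m x * opnorm be) &
      (forall m n (x : mxE k m) (y : mxE k n),
          N (m + n)%N (fun a => block_mx (x a) 0 0 (y a)) = Num.max (N m x) (N n y))].

(* The norm of a rectangular matrix x in M_{n,p}(E): norm of the square matrix
   obtained by padding x with zeros. *)
Definition padmx n p (A : 'M[C]_(n, p)) : 'M[C]_(n + p) :=
  castmx (erefl _, addnC p n) (block_mx A (0 : 'M_(n, n)) (0 : 'M_(p, p)) (0 : 'M_(p, n))).

Definition rnorm k (N : mxnorms k) n p (x : 'I_k -> 'M[C]_(n, p)) : R :=
  N (n + p)%N (fun a => padmx (x a)).

Definition compl_uncond k (N : mxnorms k) : Prop :=
  forall eps : 'I_k -> C, (forall i, eps i = 1 \/ eps i = -1) ->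
  forall n (x : mxE k n), N n (fun a => eps a *: x a) <= N n x.

(* Elements of M_n(E1 (x) E2), in the basis (e1_a (x) e2_b). *)
Definition mxT k n := 'I_k -> 'I_k -> 'M[C]_n.

(* Haagerup tensor norm on M_n(E1 (x)_h E2):
   ||u||_h = inf { ||x||_{M_{n,p}(E1)} ||y||_{M_{p,n}(E2)} : u = x (.) y },
   where (x (.) y)_{ij} = sum_l x_{il} (x) y_{lj}, i.e. the coefficient of
   e1_a (x) e2_b is the matrix product x_a y_b. *)
Definition haagerup_norm k (N1 N2 : mxnorms k) n (u : mxT k n) : R :=
  inf [set r : R | exists p (x : 'I_k -> 'M[C]_(n, p)) (y : 'I_k -> 'M[C]_(p, n)),
         (forall a b, u a b = x a *m y b) /\ r = rnorm N1 x * rnorm N2 y].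

Definition Delta k n (u : mxT k n) : mxT k n :=
  fun a b => if a == b then u a b else 0.

End OpSpaces.

(* Main.v *)
Require Import Defs.
From HB Require Import structures.
From mathcomp Require Import all_boot all_order all_algebra.
From mathcomp Require Import boolp classical_sets reals.
From mathcomp Require Import complex.
From mathcomp Require Import ring lra.
Import Order.TTheory GRing.Theory Num.Theory.
Local Open Scope ring_scope.
Local Open Scope classical_set_scope.
Set Implicit Arguments. Unset Strict Implicit.
Section S.
Variable R : realType.
Local Notation C := R[i].
Lemma ReD (a b : C) : complex.Re (a + b) = complex.Re a + complex.Re b.
Proof. by case: a => ??; case: b. Qed.
Lemma ImD (a b : C) : complex.Im (a + b) = complex.Im a + complex.Im b.
Proof. by case: a => ??; case: b. Qed.
Lemma cabs2 (a : C) : cabs a ^+ 2 = complex.Re a ^+ 2 + complex.Im a ^+ 2.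
Proof. by rewrite /cabs sqr_sqrtr // addr_ge0 ?sqr_ge0. Qed.
Lemma cabsD2 (a b : C) : cabs (a + b) ^+ 2 <= 2 * (cabs a ^+ 2 + cabs b ^+ 2).
Proof.
rewrite !cabs2 ReD ImD.
have h1 := sqr_ge0 (complex.Re a - complex.Re b).
have h2 := sqr_ge0 (complex.Im a - complex.Im b).
move: h1 h2; set x := complex.Re a; set y := complex.Re b; set z := complex.Im a; set w := complex.Im b.
rewrite !expr2 => h1 h2. nra. Qed.
Definition vn2 {m} (v : 'cV[C]_m) : R := \sum_i cabs (v i 0) ^+ 2.
Lemma vn2_ge0 m (v : 'cV[C]_m) : 0 <= vn2 v.
Proof. by apply: sumr_ge0 => i _; rewrite sqr_ge0. Qed.
Lemma vnormE m (v : 'cV[C]_m) : vnorm v = Num.sqrt (vn2 v).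
Proof. by []. Qed.
Lemma vn2_col a b (u : 'cV[C]_a) (w : 'cV[C]_b) : vn2 (col_mx u w) = vn2 u + vn2 w.
Proof. by rewrite /vn2 big_split_ord /=; congr (_ + _); apply: eq_bigr => i _; rewrite ?col_mxEu ?col_mxEd. Qed.
Lemma vn2_add m (u w : 'cV[C]_m) : vn2 (u + w) <= 2 * (vn2 u + vn2 w).
Proof.
rewrite /vn2 -big_split mulr_sumr /=; apply: ler_sum => i _.
by rewrite mxE cabsD2.
Qed.
Lemma cabs0 : cabs (0 : C) = 0.
Proof. by rewrite /cabs /= expr0n /= addr0 sqrtr0. Qed.
Lemma vn2_0 m : vn2 (0 : 'cV[C]_m) = 0.
Proof. by rewrite /vn2 big1 // => i _; rewrite mxE cabs0 expr0n. Qed.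
Definition Jc {a b} (e : a = b) : 'M[C]_(a, b) := castmx (erefl a, e) 1%:M.
Definition Jr {a b} (e : a = b) : 'M[C]_(b, a) := castmx (e, erefl a) 1%:M.
Lemma vn2_Jc a b (e : a = b) v : vn2 (Jc e *m v) = vn2 v.
Proof. by case: b / e v => v; rewrite /Jc castmx_id mul1mx. Qed.
Lemma vn2_Jr a b (e : a = b) v : vn2 (Jr e *m v) = vn2 v.
Proof. by case: b / e v => v; rewrite /Jr castmx_id mul1mx. Qed.
Lemma JcJr a b (e : a = b) : Jc e *m Jr e = 1%:M.
Proof. by case: b / e; rewrite /Jc /Jr castmx_id mul1mx. Qed.
Lemma castJc a c b (e : a = b) (M : 'M[C]_(c, a)) : castmx (erefl c, e) M = M *m Jc e.
Proof. by case: b / e; rewrite /Jc !castmx_id mulmx1. Qed.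

Definition ctr {m n} (c : R) (A : 'M[C]_(m, n)) := forall v, vn2 (A *m v) <= c * vn2 v.
Lemma ctr_mul m n l c d (A : 'M[C]_(m, n)) (B : 'M[C]_(n, l)) :
  0 <= c -> ctr c A -> ctr d B -> ctr (c * d) (A *m B).
Proof.
move=> c0 hA hB v; rewrite -mulmxA (le_trans (hA _)) // -mulrA ler_wpM2l //.
Qed.
Lemma opnorm_le m n c (A : 'M[C]_(m, n)) : 0 <= c -> ctr c A ->
  0 <= opnorm A /\ opnorm A <= Num.sqrt c.
Proof.
move=> c0 hA.
have ub : ubound [set vnorm (A *m v) | v in [set v : 'cV[C]_n | vnorm v <= 1]] (Num.sqrt c).
  move=> _ [v hv <-]; rewrite vnormE ler_sqrt //.
  apply: (le_trans (hA v)); rewrite -[X in _ <= X]mulr1 ler_wpM2l //.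
  by move: hv; rewrite /= vnormE -(sqrtr1 R) ler_sqrt // sqrtr1.
have ne : [set vnorm (A *m v) | v in [set v : 'cV[C]_n | vnorm v <= 1]] (vnorm (A *m 0)).
  by exists (0 : 'cV[C]_n) => //=; rewrite vnormE vn2_0 sqrtr0 ler01.
split; last by apply: ge_sup => //; exists (vnorm (A *m 0)).
apply: le_trans (sup_upper_bound _ ne).
  by rewrite mulmx0 vnormE vn2_0 sqrtr0.
by split; [exists (vnorm (A *m 0)) | exists (Num.sqrt c)].
Qed.
Lemma colP a b l (P : 'M[C]_(a + b, l) -> Prop) :
  (forall u w, P (col_mx u w)) -> forall v, P v.
Proof. by move=> h v; rewrite -[v]vsubmxK. Qed.
Lemma pad_mul n p (z : 'M[C]_(n, p)) : padmx z = block_mx z 0 0 0 *m Jc (addnC p n).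
Proof. by rewrite /padmx castJc. Qed.

Lemma row_claim n p (z1 z2 : 'M[C]_(n, p)) :
  block_mx (row_mx z1 z2) 0 0 0 =
  (col_mx (row_mx (row_mx 1%:M 0) (row_mx 1%:M 0)) 0 : 'M[C]_(n + (p + p), (n + p) + (n + p)))
  *m block_mx (block_mx z1 0 0 0) 0 0 (block_mx z2 0 0 0)
  *m (col_mx (col_mx (row_mx (row_mx 1%:M 0) 0) 0) (col_mx (row_mx (row_mx 0 1%:M) 0) 0)
       : 'M[C]_((p + n) + (p + n), (p + p) + n)).
Proof.
rewrite !block_mxEv !mul_col_mx !mul0mx !mul_row_col.
rewrite !mul_mx_row ?mulmx0 ?row_mx0 !mul_row_col !mul1mx !mul0mx !addr0.
rewrite add_row_mx addr0 add0r !mul_row_col !mul0mx !addr0 !mul_mx_row !mulmx0 !mulmx1 ?mul0mx add_row_mx add_row_mx !addr0 add0r.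
by [].
Qed.
Lemma diag_pad n p (z1 z2 : 'M[C]_(n, p)) :
  block_mx (padmx z1) 0 0 (padmx z2) =
  block_mx (block_mx z1 0 0 0) 0 0 (block_mx z2 0 0 0) *m
  block_mx (Jc (addnC p n)) 0 0 (Jc (addnC p n)).
Proof. by rewrite mulmx_block !mulmx0 !mul0mx !addr0 !add0r -!pad_mul. Qed.
Lemma diagJ a b (e : a = b) :
  block_mx (Jc e) 0 0 (Jc e) *m block_mx (Jr e) 0 0 (Jr e) = 1%:M :> 'M[C]_(a + a).
Proof. by rewrite mulmx_block !mulmx0 !mul0mx !addr0 !add0r JcJr -scalar_mx_block. Qed.
Lemma ctr_diagJr a b (e : a = b) : ctr 1 (block_mx (Jr e) 0 0 (Jr e) : 'M[C]_(b + b, a + a)).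
Proof.
apply: colP => u w; rewrite mul_block_col !mul0mx addr0 add0r !vn2_col !vn2_Jr mul1r.
by [].
Qed.
Lemma ctr_Jc a b (e : a = b) : ctr 1 (Jc e : 'M[C]_(a, b)).
Proof. by move=> v; rewrite vn2_Jc mul1r. Qed.

Lemma row_bound k (N : mxnorms R k) (H : is_opspace N) n p (z1 z2 : 'I_k -> 'M[C]_(n, p)) :
  rnorm N (fun a => row_mx (z1 a) (z2 a)) <= Num.sqrt 2 * Num.max (rnorm N z1) (rnorm N z2).
Proof.
case: H => [[N0 _] _ _ HR1 HR2].
set al := (col_mx (row_mx (row_mx 1%:M 0) (row_mx 1%:M 0)) 0 : 'M[C]_(n + (p + p), (n + p) + (n + p))).
set be0 := (col_mx (col_mx (row_mx (row_mx 1%:M 0) 0) 0) (col_mx (row_mx (row_mx 0 1%:M) 0) 0)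
       : 'M[C]_((p + n) + (p + n), (p + p) + n)).
set be := block_mx (Jr (addnC p n)) 0 0 (Jr (addnC p n)) *m be0 *m Jc (addnC (p + p)%N n).
have E : (fun a => padmx (row_mx (z1 a) (z2 a))) =
   (fun a => al *m block_mx (padmx (z1 a)) 0 0 (padmx (z2 a)) *m be).
  apply: funext => a; rewrite pad_mul row_claim diag_pad /be -!mulmxA.
  by rewrite (mulmxA (block_mx (Jc _) _ _ _)) diagJ mul1mx.
have cal : ctr 2 al.
  apply: colP => u w; move: w; apply: colP => v3 v4; move: u; apply: colP => v1 v2.
  rewrite /al mul_col_mx mul0mx !mul_row_col !mul1mx !mul0mx !addr0 !vn2_col vn2_0 addr0.
  apply: le_trans (vn2_add v1 v3) _; rewrite ler_wpM2l // lerD // lerDl vn2_ge0 //.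
have cbe : ctr 1 be.
  suff : ctr (1 * 1 * 1) be by rewrite !mulr1.
  rewrite /be.
  apply: ctr_mul; [by rewrite mulr1 | | exact: ctr_Jc].
  apply: ctr_mul; [by [] | exact: ctr_diagJr | ].
  apply: colP => u w; move: u; apply: colP => w1 w2.
  rewrite /be0 !mul_col_mx !mul_row_col !mul1mx !mul0mx !addr0 !add0r.
  rewrite !vn2_col !vn2_0 !addr0 mul1r lerDl vn2_ge0 //.
have [oal0 oal] := opnorm_le (ler0n _ 2) cal.
have [obe0 obe] := opnorm_le ler01 cbe.
rewrite sqrtr1 in obe.
rewrite /rnorm E (le_trans (HR1 _ _ _ _ _)) // HR2.
rewrite -[X in _ <= X]mulr1 ler_pM // ?mulr_ge0 ?le_max ?N0 // ler_pM // ?le_max ?N0 //.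
Qed.
Lemma col_claim n p (w1 w2 : 'M[C]_(p, n)) :
  block_mx (col_mx w1 w2) 0 0 0 =
  (col_mx (col_mx (row_mx (row_mx 1%:M 0) 0) (row_mx 0 (row_mx 1%:M 0))) 0
     : 'M[C]_((p + p) + n, (p + n) + (p + n)))
  *m block_mx (block_mx w1 0 0 0) 0 0 (block_mx w2 0 0 0)
  *m (col_mx (col_mx (row_mx 1%:M 0) 0) (col_mx (row_mx 1%:M 0) 0)
       : 'M[C]_((n + p) + (n + p), n + (p + p))).
Proof.
rewrite !block_mxEv !mul_col_mx !mul0mx !mul_row_col.
rewrite !mul_mx_row ?mulmx0 ?row_mx0 !mul_row_col !mul1mx !mul0mx ?addr0 ?add0r.
rewrite !row_mx0 !addr0 !add0r !mul_row_col !mul0mx !addr0 !mul_mx_row !mulmx1 !mulmx0 ?row_mx0 ?addr0.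
by rewrite add0r -block_mxEv block_mxEh col_mx0.
Qed.
Lemma col_bound k (N : mxnorms R k) (H : is_opspace N) n p (w1 w2 : 'I_k -> 'M[C]_(p, n)) :
  rnorm N (fun a => col_mx (w1 a) (w2 a)) <= Num.sqrt 2 * Num.max (rnorm N w1) (rnorm N w2).
Proof.
case: H => [[N0 _] _ _ HR1 HR2].
set al := (col_mx (col_mx (row_mx (row_mx 1%:M 0) 0) (row_mx 0 (row_mx 1%:M 0))) 0
     : 'M[C]_((p + p) + n, (p + n) + (p + n))).
set be0 := (col_mx (col_mx (row_mx 1%:M 0) 0) (col_mx (row_mx 1%:M 0) 0)
       : 'M[C]_((n + p) + (n + p), n + (p + p))).
set be := block_mx (Jr (addnC n p)) 0 0 (Jr (addnC n p)) *m be0 *m Jc (addnC n (p + p)%N).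
have E : (fun a => padmx (col_mx (w1 a) (w2 a))) =
   (fun a => al *m block_mx (padmx (w1 a)) 0 0 (padmx (w2 a)) *m be).
  apply: funext => a; rewrite pad_mul col_claim diag_pad /be -!mulmxA.
  by rewrite (mulmxA (block_mx (Jc _) _ _ _)) diagJ mul1mx.
have cal : ctr 1 al.
  apply: colP => u w; move: w; apply: colP => v3 v4; move: u; apply: colP => v1 v2.
  rewrite /al mul_col_mx mul0mx !mul_col_mx !mul_row_col !mul1mx !mul0mx ?addr0 ?add0r.
  rewrite !vn2_col vn2_0 addr0 mul1r lerD // lerDl vn2_ge0 //.
have cbe : ctr 2 be.
  suff : ctr (1 * 2 * 1) be by rewrite mulr1 mul1r.
  rewrite /be.
  apply: ctr_mul; [by rewrite mul1r ler0n | | exact: ctr_Jc].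
  apply: ctr_mul; [by [] | exact: ctr_diagJr | ].
  apply: colP => u w.
  rewrite /be0 !mul_col_mx !mul_row_col !mul1mx !mul0mx !addr0.
  rewrite !vn2_col !vn2_0 !addr0 mulr2n mulrDl mul1r.
  by rewrite lerD // lerDl vn2_ge0.
have [oal0 oal] := opnorm_le ler01 cal.
have [obe0 obe] := opnorm_le (ler0n _ 2) cbe.
rewrite sqrtr1 in oal.
rewrite /rnorm E; apply: le_trans (HR1 _ _ _ _ _) _.
rewrite HR2 [X in _ <= X]mulrC -[X in _ <= X]mul1r.
rewrite mulrA ler_pM // ?mulr_ge0 ?le_max ?N0 // ler_pM // ?le_max ?N0 //.
Qed.
Lemma padZ n p (c : C) (z : 'M[C]_(n, p)) : padmx (c *: z) = c *: padmx z.
Proof. by rewrite !pad_mul scalemxAl scale_block_mx !scaler0. Qed.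
Lemma cabs_half : cabs (2^-1 : C) = 2^-1.
Proof.
have -> : (2^-1 : C) = real_complex R (2^-1) by rewrite fmorphV rmorph_nat.
rewrite /cabs /= expr0n /= addr0 sqrtr_sqr ger0_norm // invr_ge0 ler0n //.
Qed.
Lemma rnormZ k (N : mxnorms R k) (H : is_opspace N) n p (c : C) (z : 'I_k -> 'M[C]_(n, p)) :
  rnorm N (fun a => c *: z a) = cabs c * rnorm N z.
Proof.
case: H => _ HZ _ _ _; rewrite /rnorm -HZ; congr (N _ _).
by apply: funext => a; rewrite padZ.
Qed.
Lemma rnormU k (N : mxnorms R k) (U : compl_uncond N) n p (eps : 'I_k -> C)
  (he : forall i, eps i = 1 \/ eps i = -1) (z : 'I_k -> 'M[C]_(n, p)) :
  rnorm N (fun a => eps a *: z a) <= rnorm N z.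
Proof.
rewrite /rnorm; have -> : (fun a => padmx (eps a *: z a)) = (fun a => eps a *: padmx (z a)).
  by apply: funext => a; rewrite padZ.
exact: U.
Qed.
Lemma rnorm_ge0 k (N : mxnorms R k) (H : is_opspace N) n p (z : 'I_k -> 'M[C]_(n, p)) :
  0 <= rnorm N z.
Proof. by case: H => [[N0 _] _ _ _ _]; apply: N0. Qed.

Lemma step k (N1 N2 : mxnorms R k) (H1 : is_opspace N1) (H2 : is_opspace N2)
  (U1 : compl_uncond N1) (U2 : compl_uncond N2) n p
  (x : 'I_k -> 'M[C]_(n, p)) (y : 'I_k -> 'M[C]_(p, n)) (i : 'I_k) :
  exists p' (x' : 'I_k -> 'M[C]_(n, p')) (y' : 'I_k -> 'M[C]_(p', n)),
    (forall a b, x' a *m y' b = if (a == i) == (b == i) then x a *m y b else 0) /\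
    rnorm N1 x' * rnorm N2 y' <= rnorm N1 x * rnorm N2 y.
Proof.
pose eps a : C := if a == i then 1 else -1.
have he : forall a, eps a = 1 \/ eps a = -1 by move=> a; rewrite /eps; case: (a == i); [left|right].
exists (p + p)%N, (fun a => row_mx (x a) (eps a *: x a)),
  (fun a => col_mx (2^-1 *: y a) (2^-1 *: (eps a *: y a))).
split.
  move=> a b; rewrite mul_row_col -!scalemxAr -!scalemxAl !scalerA -scalerDl.
  rewrite /eps; case: (a == i); case: (b == i) => /=.
  - by rewrite -[RHS]scale1r; congr (_ *: _); field.
  - by rewrite -(scale0r (x a *m y b)); congr (_ *: _); field.
  - by rewrite -(scale0r (x a *m y b)); congr (_ *: _); field.
  - by rewrite -[RHS]scale1r; congr (_ *: _); field.
have hx : rnorm N1 (fun a => row_mx (x a) (eps a *: x a)) <= Num.sqrt 2 * rnorm N1 x.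
  apply: le_trans (row_bound H1 _ _) _.
  rewrite ler_wpM2l ?sqrtr_ge0 // ge_max lexx; exact: rnormU.
have hy : rnorm N2 (fun a => col_mx (2^-1 *: y a) (2^-1 *: (eps a *: y a))) <=
          Num.sqrt 2 * (2^-1 * rnorm N2 y).
  apply: le_trans (col_bound H2 _ _) _.
  rewrite ler_wpM2l ?sqrtr_ge0 // (rnormZ H2 _ (fun a => y a)).
  rewrite (rnormZ H2 _ (fun a => eps a *: y a)) cabs_half ge_max lexx /=.
  by rewrite ler_wpM2l ?invr_ge0 ?ler0n //; exact: rnormU.
apply: le_trans (ler_pM (rnorm_ge0 H1 _) (rnorm_ge0 H2 _) hx hy) _.
rewrite mulrCA !mulrA -expr2 sqr_sqrtr ?ler0n //.
rewrite [2 * _]mulrC mulfK ?pnatr_eq0 //.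
Qed.
Lemma fact_exists k n (u : mxT R k n) :
  exists p (x : 'I_k -> 'M[C]_(n, p)) (y : 'I_k -> 'M[C]_(p, n)),
    forall a b, u a b = x a *m y b.
Proof.
pose q (l : 'I_(k * n)) : 'I_k * 'I_n := enum_val (cast_ord (esym (mxvec_cast k n)) l).
have qE c r : q (mxvec_index c r) = (c, r) by rewrite /q cast_ordK enum_rankK.
exists (k * n)%N, (fun a => \matrix_(i, l) ((q l == (a, i))%:R : C)),
  (fun b => \matrix_(l, j) u (q l).1 b (q l).2 j).
move=> a b; apply/matrixP => i j; rewrite mxE.
rewrite (reindex _ (curry_mxvec_bij _ _)) /=.
rewrite (bigD1 (a, i)) //= big1 ?addr0.
  by rewrite !mxE qE eqxx mul1r.
move=> [c r] /= ne; rewrite !mxE qE.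
by rewrite (negbTE ne) mul0r.
Qed.

Definition Dsel k n (s : seq 'I_k) (u : mxT R k n) : mxT R k n :=
  fun a b => if all (fun j => (a == j) == (b == j)) s then u a b else 0.

Lemma iter k (N1 N2 : mxnorms R k) (H1 : is_opspace N1) (H2 : is_opspace N2)
  (U1 : compl_uncond N1) (U2 : compl_uncond N2) n (s : seq 'I_k) :
  forall p (x : 'I_k -> 'M[C]_(n, p)) (y : 'I_k -> 'M[C]_(p, n)),
  exists p' (x' : 'I_k -> 'M[C]_(n, p')) (y' : 'I_k -> 'M[C]_(p', n)),
    (forall a b, x' a *m y' b = Dsel s (fun a b => x a *m y b) a b) /\
    rnorm N1 x' * rnorm N2 y' <= rnorm N1 x * rnorm N2 y.
Proof.
elim: s => [|j s IH] p x y.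
  by exists p, x, y; split.
have [p1 [x1 [y1 [E1 L1]]]] := IH p x y.
have [p2 [x2 [y2 [E2 L2]]]] := step H1 H2 U1 U2 x1 y1 j.
exists p2, x2, y2; split; last exact: le_trans L2 L1.
move=> a b; rewrite E2 E1 /Dsel /=.
by case: ((a == j) == (b == j)).
Qed.

Lemma Delta_Dsel k n (u : mxT R k n) : Delta u = Dsel (enum 'I_k) u.
Proof.
apply: funext => a; apply: funext => b; rewrite /Delta /Dsel.
case: eqP => [->|ne].
  by rewrite (_ : all _ _ = true) //; apply/allP => j _; rewrite eqxx.
case: allP => // h; exfalso; have := h a (mem_enum _ a); rewrite eqxx.
by case: (b =P a) => [ba _|] //; apply: ne; rewrite ba.
Qed.
End S.

Unset Implicit Arguments.
Set Strict Implicit.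

Theorem lemma5p2 (R : realType) (k : nat) (N1 N2 : mxnorms R k)
  (H1 : is_opspace N1) (H2 : is_opspace N2)
  (U1 : compl_uncond N1) (U2 : compl_uncond N2) :
  forall n (u : mxT R k n),
    haagerup_norm N1 N2 (Delta u) <= haagerup_norm N1 N2 u.
Proof.
move=> n u; rewrite /haagerup_norm.
apply: lb_le_inf.
  have [p [x [y E]]] := fact_exists u.
  by exists (rnorm N1 x * rnorm N2 y), p, x, y.
move=> _ [p [x [y [E ->]]]].
have [p' [x' [y' [E' L]]]] := iter H1 H2 U1 U2 (enum 'I_k) x y.
apply: le_trans L.
have hlb : has_lbound [set r : R | exists p (x : 'I_k -> 'M[R[i]]_(n, p)) (y : 'I_k -> 'M[R[i]]_(p, n)),
         (forall a b, Delta u a b = x a *m y b) /\ r = rnorm N1 x * rnorm N2 y].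
  exists 0 => _ [q [a [b [_ ->]]]].
  by rewrite mulr_ge0 // rnorm_ge0.
apply: (ge_inf hlb).
exists p', x', y'; split => // a b.
have -> : u = (fun a b => x a *m y b) by apply: funext => c; apply: funext => d; apply: E.
by rewrite Delta_Dsel E'.
Qed.
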